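(* Assume the capacities satisfy (C1)–(C3), and let $\gamma=\frac1{\tau-1}+\varepsilon<\frac12$ be as in (C3). Let $M$ be a random variable with $\mathbb P(M=m)=\lambda_m/l_N$, $1\le m\le N$, and let $d_N$ be a random variable with distribution $\{g^{(N)}_n\}_{n\ge0}$. Then $$\mathrm{Var}(\lambda_M)=O(N^\gamma)\qquad\text{and}\qquad\mathrm{Var}(d_N)=O(N^\gamma).$$
   Context: Capacities $\lambda_1,\dots,\lambda_N>0$ deterministic; $l_N=\sum_i\lambda_i$, $\mu_N=\frac1N\sum_i\lambda_i$, $\nu_N=\sum_i\lambda_i^2/\sum_i\lambda_i$, $f^{(N)}_n=\frac1N\sum_i e^{-\lambda_i}\frac{\lambda_i^n}{n!}$, $g^{(N)}_n=\frac{1}{N\mu_N}\sum_i e^{-\lambda_i}\frac{\lambda_i^{n+1}}{n!}$ ($n\ge0$); $d_{TV}(p,q)=\frac12\sum_j|p_j-q_j|$. (C1): there are $\mu\in(0,\infty)$, $\nu\in(1,\infty)$, $\alpha_1>0$ with $|\mu_N-\mu|,|\nu_N-\nu|=O(N^{-\alpha_1})$. (C2): there are $N$-independent sequences $f,g$ and $\alpha_2>0$ with $d_{TV}(f^{(N)},f),d_{TV}(g^{(N)},g)=O(N^{-\alpha_2})$. (C3): there is $\tau>3$ such that for every $\varepsilon>0$ (with $\gamma:=\frac1{\tau-1}+\varepsilon<\frac12$), $\limsup_N\frac1N\sum_i\lambda_i^{\tau-1-\varepsilon}<\infty$ and $\max_i\lambda_i\le N^\gamma$. *)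

(* Defs.v *)
From Stdlib Require Import Reals Arith Factorial.
From Coquelicot Require Import Coquelicot.
Open Scope R_scope.

Fixpoint sumN (N : nat) (f : nat -> R) : R :=
  match N with O => 0 | S n => sumN n f + f n end.

(* Capacities: lam N i is lambda_{i+1} at size N, for i < N. *)
Definition lN (lam : nat -> nat -> R) (N : nat) : R := sumN N (lam N).
Definition muN (lam : nat -> nat -> R) (N : nat) : R := lN lam N / INR N.
Definition nuN (lam : nat -> nat -> R) (N : nat) : R :=
  sumN N (fun i => (lam N i) ^ 2) / lN lam N.
Definition fN (lam : nat -> nat -> R) (N n : nat) : R :=
  / INR N * sumN N (fun i => exp (- lam N i) * (lam N i) ^ n / INR (Factorial.fact n)).
Definition gN (lam : nat -> nat -> R) (N n : nat) : R :=
  / (INR N * muN lam N) *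
  sumN N (fun i => exp (- lam N i) * (lam N i) ^ (S n) / INR (Factorial.fact n)).

Definition dTV (p q : nat -> R) : R := Series (fun j => Rabs (p j - q j)) / 2.

Definition bigO (u v : nat -> R) : Prop :=
  exists C : R, exists N0 : nat, forall N : nat, (N0 <= N)%nat -> Rabs (u N) <= C * v N.

Definition fin_mean (N : nat) (p x : nat -> R) : R := sumN N (fun i => p i * x i).
Definition fin_var (N : nat) (p x : nat -> R) : R :=
  sumN N (fun i => p i * (x i - fin_mean N p x) ^ 2).

Definition nat_mean (p : nat -> R) : R := Series (fun n => INR n * p n).
Definition nat_var (p : nat -> R) : R :=
  Series (fun n => (INR n - nat_mean p) ^ 2 * p n).

(* Main.v *)
Require Import Defs.
From Stdlib Require Import Reals Lra Lia Arith Factorial.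
From Coquelicot Require Import Coquelicot.
Open Scope R_scope.

Lemma sumN_ext N f g : (forall i, (i < N)%nat -> f i = g i) -> sumN N f = sumN N g.
Proof. induction N; simpl; intros H; auto. rewrite IHN, H; auto. Qed.
Lemma sumN_plus N f g : sumN N (fun i => f i + g i) = sumN N f + sumN N g.
Proof. induction N; simpl; [lra|]. rewrite IHN; lra. Qed.
Lemma sumN_scal N c f : sumN N (fun i => c * f i) = c * sumN N f.
Proof. induction N; simpl; [lra|]. rewrite IHN; lra. Qed.
Lemma sumN_le N f g : (forall i, (i < N)%nat -> f i <= g i) -> sumN N f <= sumN N g.
Proof. induction N; simpl; intros H; [lra|]. assert (H1:=H N (Nat.lt_succ_diag_r N)).
 assert (sumN N f <= sumN N g) by (apply IHN; intros; apply H; lia). lra. Qed.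
Lemma sumN_pos N f : (0 < N)%nat -> (forall i, (i < N)%nat -> 0 < f i) -> 0 < sumN N f.
Proof. induction N; simpl; intros H0 H; [lia|]. assert (H1:=H N (Nat.lt_succ_diag_r N)).
 destruct N. simpl; lra.
 assert (0 < sumN (S N) f) by (apply IHN; [lia| intros; apply H; lia]). lra. Qed.

Lemma poi0 x : is_series (fun n => x ^ n / INR (fact n)) (exp x).
Proof.
  assert (H := is_exp_Reals x). unfold is_pseries in H.
  eapply is_series_ext; [|exact H]. intros n; simpl.
  rewrite pow_n_pow; unfold scal; simpl; unfold mult; simpl; unfold Rdiv; reflexivity.
Qed.

Lemma is_series_sumN N (F : nat -> nat -> R) L :
  (forall i, is_series (F i) (L i)) ->
  is_series (fun n => sumN N (fun i => F i n)) (sumN N L).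
Proof.
  intros H. induction N; simpl.
  - assert (H0 := is_series_scal (0:R) _ _ (poi0 0)).
    unfold scal in H0; simpl in H0; unfold mult in H0; simpl in H0.
    rewrite Rmult_0_l in H0.
    exact (is_series_ext _ _ _ (fun n => Rmult_0_l _) H0).
  - apply (is_series_plus _ _ _ _ IHN (H N)).
Qed.


Lemma ser_shift (a : nat -> R) (l' : R) : is_series (fun k => a (S k)) l' -> is_series a (l' + a 0%nat).
Proof. intros H; apply (is_series_decr_1 a (l' + a 0%nat)).
  match goal with |- is_series _ ?v => replace v with l' end. exact H.
  change (@eq R l' (l' + a 0%nat + - a 0%nat)). ring. Qed.
Lemma ser_scal (c : R) (a : nat -> R) (l : R) : is_series a l -> is_series (fun n => c * a n) (c * l).
Proof. intros H; exact (is_series_scal c a l H). Qed.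
Lemma ser_plus (a b : nat -> R) (la lb : R) : is_series a la -> is_series b lb -> is_series (fun n => a n + b n) (la + lb).
Proof. intros H1 H2; exact (is_series_plus a b la lb H1 H2). Qed.
Lemma ser_ext (a b : nat -> R) (l l' : R) : (forall n, a n = b n) -> l = l' -> is_series a l -> is_series b l'.
Proof. intros H1 <- H2; exact (is_series_ext a b l H1 H2). Qed.

Lemma factS_ne k : INR (fact k) <> 0. Proof. apply INR_fact_neq_0. Qed.

Lemma poi1 x : is_series (fun n => INR n * (x ^ n / INR (fact n))) (x * exp x).
Proof.
  eapply ser_ext; [intros; reflexivity| |apply ser_shift].
  2: { eapply ser_ext; [|reflexivity|apply (ser_scal x _ _ (poi0 x))].
       intros n. simpl (fact (S n)). rewrite plus_INR, mult_INR, S_INR. simpl pow.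
       assert (H:=factS_ne n). pose proof (pos_INR n). pose proof (lt_0_INR _ (lt_O_fact n)). field. split; [nra|exact H]. }
  simpl. lra.
Qed.

Lemma poi2 x : is_series (fun n => INR n ^ 2 * (x ^ n / INR (fact n))) (x ^ 2 * exp x + x * exp x).
Proof.
  eapply ser_ext; [intros; reflexivity| |apply ser_shift].
  2: { eapply ser_ext; [|reflexivity|apply (ser_scal x _ _ (ser_plus _ _ _ _ (poi1 x) (poi0 x)))].
       intros n. simpl (fact (S n)). rewrite plus_INR, mult_INR, S_INR. simpl pow.
       assert (H:=factS_ne n). pose proof (pos_INR n). pose proof (lt_0_INR _ (lt_O_fact n)). field. split; [nra|exact H]. }
  simpl. ring.
Qed.

Lemma expm_e x : exp (- x) * exp x = 1.
Proof. rewrite <- exp_plus. replace (-x + x) with 0 by ring. apply exp_0. Qed.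

Definition T x n := exp (- x) * x ^ (S n) / INR (fact n).

Lemma T0 x : is_series (T x) x.
Proof. eapply ser_ext; [ | | apply (ser_scal (x * exp (-x)) _ _ (poi0 x))].
  intros n; unfold T; simpl; unfold Rdiv; ring.
  rewrite Rmult_assoc, expm_e; ring. Qed.
Lemma T1 x : is_series (fun n => INR n * T x n) (x ^ 2).
Proof. eapply ser_ext; [ | | apply (ser_scal (x * exp (-x)) _ _ (poi1 x))].
  intros n; unfold T; simpl; unfold Rdiv; ring.
  replace (x * exp (- x) * (x * exp x)) with (x*x*(exp (-x) * exp x)) by ring. rewrite expm_e; ring. Qed.
Lemma T2 x : is_series (fun n => INR n ^ 2 * T x n) (x ^ 3 + x ^ 2).
Proof. eapply ser_ext; [ | | apply (ser_scal (x * exp (-x)) _ _ (poi2 x))].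
  intros n; unfold T; simpl; unfold Rdiv; ring.
  replace (x * exp (- x) * (x ^ 2 * exp x + x * exp x)) with ((x^3+x^2)*(exp (-x) * exp x)) by ring. rewrite expm_e; ring. Qed.

Lemma sumN_zero N : sumN N (fun _ => 0) = 0.
Proof. induction N; simpl; [|rewrite IHN]; ring. Qed.

Lemma fin_var_id N p x : sumN N p = 1 ->
  fin_var N p x = sumN N (fun i => p i * x i ^ 2) - (fin_mean N p x) ^ 2.
Proof.
  intros Hp. unfold fin_var. set (m := fin_mean N p x).
  rewrite (sumN_ext N _ (fun i => (p i * x i ^ 2 + (-2 * m) * (p i * x i)) + m ^ 2 * p i))
    by (intros; ring).
  rewrite sumN_plus, sumN_plus, sumN_scal, sumN_scal, Hp.
  change (sumN N (fun i => p i * x i)) with m. ring.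
Qed.

Lemma core (lam : nat -> nat -> R) N P (HN : (0 < N)%nat)
  (Hpos : forall i, (i < N)%nat -> 0 < lam N i)
  (Hmax : forall i, (i < N)%nat -> lam N i <= P) :
  0 <= fin_var N (fun m => lam N m / lN lam N) (lam N) /\
  fin_var N (fun m => lam N m / lN lam N) (lam N) <= P * nuN lam N /\
  nat_var (gN lam N) = fin_var N (fun m => lam N m / lN lam N) (lam N) + nuN lam N /\
  0 <= nuN lam N.
Proof.
  assert (Hl : 0 < lN lam N) by (apply sumN_pos; auto).
  set (l := lN lam N) in *.
  set (A2 := sumN N (fun i => lam N i ^ 2)).
  set (A3 := sumN N (fun i => lam N i ^ 3)).
  assert (Hp : sumN N (fun m => lam N m / l) = 1).
  { rewrite (sumN_ext N _ (fun i => / l * lam N i)) by (intros; unfold Rdiv; ring).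
    rewrite sumN_scal. unfold l, lN. field. fold (lN lam N); fold l; lra. }
  assert (Hm : fin_mean N (fun m => lam N m / l) (lam N) = A2 / l).
  { unfold fin_mean. rewrite (sumN_ext N _ (fun i => / l * lam N i ^ 2)) by (intros; unfold Rdiv; ring).
    rewrite sumN_scal. unfold A2, Rdiv; ring. }
  assert (Hq : sumN N (fun i => lam N i / l * lam N i ^ 2) = A3 / l).
  { rewrite (sumN_ext N _ (fun i => / l * lam N i ^ 3)) by (intros; unfold Rdiv; ring).
    rewrite sumN_scal. unfold A3, Rdiv; ring. }
  assert (HV : fin_var N (fun m => lam N m / l) (lam N) = A3 / l - (A2 / l) ^ 2).
  { rewrite fin_var_id by exact Hp. rewrite Hm, Hq. reflexivity. }
  assert (HV0 : 0 <= fin_var N (fun m => lam N m / l) (lam N)).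
  { unfold fin_var. rewrite <- (sumN_zero N). apply sumN_le. intros i Hi.
    apply Rmult_le_pos. apply Rlt_le, Rdiv_lt_0_compat; auto. apply pow2_ge_0. }
  assert (HA : A3 <= P * A2).
  { unfold A3, A2. rewrite <- sumN_scal. apply sumN_le. intros i Hi.
    pose proof (Hpos i Hi); pose proof (Hmax i Hi). simpl. nra. }
  assert (Hnu : nuN lam N = A2 / l) by reflexivity.
  assert (HA2 : 0 <= A2).
  { unfold A2. rewrite <- (sumN_zero N). apply sumN_le. intros; apply pow2_ge_0. }
  assert (Hc : INR N * muN lam N = l).
  { unfold muN. fold l. field. apply not_0_INR. lia. }
  assert (Hg : forall n, gN lam N n = / l * sumN N (fun i => T (lam N i) n)).
  { intros; unfold gN, T; rewrite Hc; reflexivity. }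
  assert (G0 : is_series (gN lam N) (/ l * l)).
  { eapply ser_ext; [ | | apply (ser_scal (/ l) _ _ (is_series_sumN N (fun i n => T (lam N i) n) (lam N) (fun i => T0 _)))].
    intros n; rewrite Hg; reflexivity. reflexivity. }
  assert (G1 : is_series (fun n => INR n * gN lam N n) (/ l * A2)).
  { eapply ser_ext; [ | | apply (ser_scal (/ l) _ _ (is_series_sumN N (fun i n => INR n * T (lam N i) n) (fun i => lam N i ^ 2) (fun i => T1 _)))].
    intros n; rewrite Hg, sumN_scal; ring. reflexivity. }
  assert (G2 : is_series (fun n => INR n ^ 2 * gN lam N n) (/ l * (A3 + A2))).
  { eapply ser_ext; [ | | apply (ser_scal (/ l) _ _ (is_series_sumN N (fun i n => INR n ^ 2 * T (lam N i) n) (fun i => lam N i ^ 3 + lam N i ^ 2) (fun i => T2 _)))].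
    intros n; rewrite Hg, sumN_scal; ring. rewrite sumN_plus; reflexivity. }
  assert (Hmean : nat_mean (gN lam N) = / l * A2).
  { unfold nat_mean. apply is_series_unique. exact G1. }
  assert (Hvar : nat_var (gN lam N) = A3 / l + A2 / l - (A2 / l) ^ 2).
  { unfold nat_var. rewrite Hmean. apply is_series_unique.
    eapply ser_ext; [ | | apply (ser_plus _ _ _ _ (ser_plus _ _ _ _ G2 (ser_scal (-2 * (/ l * A2)) _ _ G1)) (ser_scal ((/ l * A2) ^ 2) _ _ G0))].
    intros n; cbv beta; ring. field. lra. }
  split; [exact HV0|]. split.
  - rewrite HV, Hnu. assert (0 <= (A2 / l) ^ 2) by apply pow2_ge_0.
    assert (A3 / l <= P * A2 / l). { unfold Rdiv. apply Rmult_le_compat_r. left; apply Rinv_0_lt_compat; lra. lra. }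
    unfold Rdiv in *. lra.
  - split. rewrite Hvar, HV, Hnu. ring.
    rewrite Hnu. apply Rmult_le_pos; [lra| left; apply Rinv_0_lt_compat; lra].
Qed.

Theorem lemmaD5 (lam : nat -> nat -> R) (tau eps : R)
  (Hpos : forall N i : nat, (i < N)%nat -> 0 < lam N i)
  (C1 : exists mu nu a1 : R, 0 < mu /\ 1 < nu /\ 0 < a1 /\
          bigO (fun N => muN lam N - mu) (fun N => Rpower (INR N) (- a1)) /\
          bigO (fun N => nuN lam N - nu) (fun N => Rpower (INR N) (- a1)))
  (C2 : exists (f g : nat -> R) (a2 : R), 0 < a2 /\
          (exists N0 : nat, forall N : nat, (N0 <= N)%nat ->
              ex_series (fun j => Rabs (fN lam N j - f j)) /\
              ex_series (fun j => Rabs (gN lam N j - g j))) /\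
          bigO (fun N => dTV (fN lam N) f) (fun N => Rpower (INR N) (- a2)) /\
          bigO (fun N => dTV (gN lam N) g) (fun N => Rpower (INR N) (- a2)))
  (Htau : 3 < tau)
  (C3 : forall e : R, 0 < e -> / (tau - 1) + e < / 2 ->
          (exists B : R, exists N0 : nat, forall N : nat, (N0 <= N)%nat ->
              / INR N * sumN N (fun i => Rpower (lam N i) (tau - 1 - e)) <= B) /\
          (forall N i : nat, (i < N)%nat -> lam N i <= Rpower (INR N) (/ (tau - 1) + e)))
  (Heps : 0 < eps) (Hgam : / (tau - 1) + eps < / 2) :
  bigO (fun N => fin_var N (fun m => lam N m / lN lam N) (lam N))
       (fun N => Rpower (INR N) (/ (tau - 1) + eps)) /\
  bigO (fun N => nat_var (gN lam N))
       (fun N => Rpower (INR N) (/ (tau - 1) + eps)).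
Proof.
  destruct C1 as (mu & nu & a1 & Hmu & Hnu1 & Ha1 & _ & Cn & N1 & HN1).
  destruct (C3 eps Heps Hgam) as [_ Hmax].
  assert (Hg0 : 0 <= / (tau - 1) + eps).
  { assert (0 < / (tau - 1)) by (apply Rinv_0_lt_compat; lra). lra. }
  assert (HP : forall N, (1 <= N)%nat -> 1 <= Rpower (INR N) (/ (tau - 1) + eps)).
  { intros N HN. rewrite <- (Rpower_O (INR N)) at 1.
    apply Rle_Rpower; auto. apply (le_INR 1); auto. apply lt_0_INR; lia. }
  assert (Hr : forall N, (1 <= N)%nat -> 0 < Rpower (INR N) (- a1) <= 1).
  { intros N HN. split. unfold Rpower; apply exp_pos.
    rewrite <- (Rpower_O (INR N)) by (apply lt_0_INR; lia).
    apply Rle_Rpower. apply (le_INR 1); auto. lra. }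
  assert (HK : forall N, (Nat.max N1 1 <= N)%nat -> nuN lam N <= nu + Cn /\ 0 <= Cn).
  { intros N HN. assert (H1 := HN1 N ltac:(lia)). assert (H2 := Hr N ltac:(lia)).
    pose proof (Rle_abs (nuN lam N - nu)). pose proof (Rabs_pos (nuN lam N - nu)).
    assert (0 <= Cn). { destruct (Rle_lt_dec 0 Cn); auto. nra. }
    split; [nra|auto]. }
  split.
  - exists (nu + Cn), (Nat.max N1 1). intros N HN.
    destruct (HK N HN) as [HK1 HC].
    destruct (core lam N (Rpower (INR N) (/ (tau - 1) + eps)) ltac:(lia) (fun i Hi => Hpos N i Hi) (fun i Hi => Hmax N i Hi)) as (V0 & V1 & V2 & V3).
    rewrite Rabs_pos_eq by exact V0. pose proof (HP N ltac:(lia)). nra.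
  - exists (2 * (nu + Cn)), (Nat.max N1 1). intros N HN.
    destruct (HK N HN) as [HK1 HC].
    destruct (core lam N (Rpower (INR N) (/ (tau - 1) + eps)) ltac:(lia) (fun i Hi => Hpos N i Hi) (fun i Hi => Hmax N i Hi)) as (V0 & V1 & V2 & V3).
    rewrite V2. rewrite Rabs_pos_eq by lra. pose proof (HP N ltac:(lia)). nra.
Qed.
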